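(* For every positive integer $r$ and indices $a_1,b_1,\dots,b_r\in\{1,\dots,n\}$, the following holds in $\mathcal{M}=\bar A/J$: $$\partial_{a_1}x^{b_1}x^{b_2}\cdots x^{b_r}+J=\sum_{c_2,\dots,c_r}S^{b_1b_2\cdots b_r}_{a_1c_2\cdots c_r}(H+r-1)\,x^{c_2}x^{c_3}\cdots x^{c_r}+J,$$ where $S$ is defined by $S_a^b(K)=\delta_a^b$ and, for $r\ge2$, $$S^{b_1\cdots b_r}_{a_1\cdots a_r}(K)=\delta^{b_1}_{a_1}\cdots\delta^{b_r}_{a_r}+\sum_tR^{b_1t}_{a_1a_2}(K-r+1)\,S^{b_2\cdots b_r}_{ta_3\cdots a_r}(K),$$ equivalently $S^{b_1\cdots b_r}_{a_1\cdots a_r}(H)=\delta^{b_1}_{a_1}\cdots\delta^{b_r}_{a_r}+R^{b_1c_2}_{a_1a_2}(H-r+1)\delta^{b_2}_{c_2}\delta^{b_3}_{a_3}\cdots\delta^{b_r}_{a_r}+R^{b_1c_2}_{a_1a_2}(H-r+1)R^{b_2c_3}_{c_2a_3}(H-r+2)\delta^{b_3}_{c_3}\delta^{b_4}_{a_4}\cdots\delta^{b_r}_{a_r}+\cdots+R^{b_1c_2}_{a_1a_2}(H-r+1)\cdots R^{b_{r-1}b_r}_{c_{r-1}a_r}(H-1)$ (summing over repeated indices).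
   Context: $W_\eta(2n)$ is the unital associative $\mathbb{C}$-algebra generated by $x^a,\partial_a$ ($a=1,\dots,n$) and central $\eta_{ab},\eta^{ab}$ with $x^ax^b=x^bx^a$, $\partial_a\partial_b=\partial_b\partial_a$, $\partial_ax^b-x^b\partial_a=\delta_a^b$, $\eta_{ab}=\eta_{ba}$, $\sum_b\eta_{ab}\eta^{bc}=\delta_a^c$; $n\ge3$. Repeated upper/lower indices are summed; $x_a=\eta_{ab}x^b$, $\partial^a=\eta^{ab}\partial_b$, $E=\frac i2\partial_a\partial^a$, $F=\frac i2x_ax^a$, $H=-\frac12(x^a\partial_a+\partial_ax^a)$. $A$ is the localization of $W_\eta(2n)$ at nonzero polynomials in $H$; $\mathrm{II}=AE+FA$; $\bar A=A/\mathrm{II}$ with product $\bar w\diamond\bar z=\overline{\sum_{k\ge0}\frac1{k!}(\operatorname{ad}F)^k(w)\psi_k(H)^{-1}(\operatorname{ad}E)^k(z)}$, $(\operatorname{ad}X)(y)=Xy-yX$, $\psi_0=1$, $\psi_k(H)=\prod_{j=1}^k(H+1+j-2k)$. In $\bar A$ bars are dropped and $\diamond$ is written as juxtaposition; elements $g(H)\in\mathbb{C}[\eta](H)$ are identified with their classes, and $x^a g(H)=g(H+1)x^a$, $\partial_a g(H)=g(H-1)\partial_a$ in $\bar A$. The rational dynamical $R$-matrix is $R^{bd}_{ac}(H)=\delta^b_c\delta^d_a+\eta_{ac}\eta^{bd}\frac1{H+1}$, so that $\partial_ax^b=\delta_a^b+R^{bd}_{ac}(H)x^c\partial_d$ in $\bar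 A$. $J=\sum_a\bar A\,\partial_a$ is the left ideal generated by the $\partial_a$, and $\mathcal{M}=\bar A/J$. *)

(* Defs.v *)
From HB Require Import structures.
From mathcomp Require Import all_boot all_order all_algebra.
Set Implicit Arguments. Unset Strict Implicit. Unset Printing Implicit Defensive.
Import Order.TTheory GRing.Theory Num.Theory.
Local Open Scope ring_scope.

Section Reduction.
Variables (A : unitRingType) (n : nat).
Variables (eta_lo eta_up : 'I_n -> 'I_n -> A).

Definition kdelta (b a : 'I_n) : A := (b == a)%:R.

Definition Rmat (b d a c : 'I_n) (K : A) : A :=
  kdelta b c * kdelta d a + eta_lo a c * eta_up b d * (K + 1)^-1.

Definition deltas (bs as_ : seq 'I_n) : A :=
  \prod_(p <- zip bs as_) kdelta p.1 p.2.

Fixpoint Smat (bs as_ : seq 'I_n) (K : A) {struct bs} : A :=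
  match bs with
  | [::] => 0
  | b1 :: bt =>
    match bt, as_ with
    | [::], [:: a1] => kdelta b1 a1
    | _ :: _, a1 :: a2 :: atl =>
        deltas bs as_ +
        \sum_(t < n) Rmat b1 t a1 a2 (K - (size bs).-1%:R) * Smat bt (t :: atl) K
    | _, _ => 0
    end
  end.

End Reduction.

(* Main.v *)
Require Import Defs.
From HB Require Import structures.
From mathcomp Require Import all_boot all_order all_algebra.
Import Order.TTheory GRing.Theory Num.Theory.
Local Open Scope ring_scope.
Set Warnings "-notation-overridden,-ambiguous-paths".

Lemma sum_tuple0 (V : nmodType) (I : finType) (F : seq I -> V) :
  \sum_(t : 0.-tuple I) F t = F [::].
Proof.
rewrite (eq_bigr (fun=> F [::])) => [|t _]; last by rewrite tuple0.
by rewrite sumr_const card_tuple expn0.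
Qed.

Lemma sum_tupleS (V : nmodType) (I : finType) k (F : seq I -> V) :
  \sum_(t : k.+1.-tuple I) F t = \sum_(c : I) \sum_(t : k.-tuple I) F (c :: t).
Proof.
rewrite pair_big /=.
rewrite (reindex (fun p : I * k.-tuple I => cons_tuple p.1 p.2)) //=.
exists (fun t => (thead t, behead_tuple t)) => [[c t] _|t _] /=.
  by congr pair; apply: val_inj.
by rewrite [in RHS](tuple_eta t); apply: val_inj.
Qed.

Lemma shift_inv (A : unitRingType) (u v y : A) : u \is a GRing.unit -> v \is a GRing.unit ->
  y * u = v * y -> y * u^-1 = v^-1 * y.
Proof.
move=> Hu Hv Hyu.
rewrite -[LHS]mul1r -(mulVr Hv) -mulrA (mulrA v) -Hyu -mulrA.
by rewrite (mulrA y) mulrK.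
Qed.
Section Main.
Variables (A : unitRingType) (n : nat) (x d : 'I_n -> A) (H : A)
  (eta_lo eta_up : 'I_n -> 'I_n -> A).
Hypothesis eta_lo_central : forall a b (y : A), eta_lo a b * y = y * eta_lo a b.
Hypothesis eta_up_central : forall a b (y : A), eta_up a b * y = y * eta_up a b.
Hypothesis hH_unit : forall k : int, H + k%:~R \is a GRing.unit.
Hypothesis hxH : forall a, x a * H = (H + 1) * x a.
Hypothesis hdx : forall a b, d a * x b =
     kdelta A a b + \sum_(c < n) \sum_(e < n) Rmat eta_lo eta_up b e a c H * x c * d e.

Definition inJ (z : A) := exists y : 'I_n -> A, z = \sum_(a < n) y a * d a.

Lemma inJ0 : inJ 0.
Proof. by exists (fun=> 0); rewrite big1 // => a _; rewrite mul0r. Qed.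

Lemma inJD z w : inJ z -> inJ w -> inJ (z + w).
Proof.
move=> [y1 ->] [y2 ->]; exists (fun a => y1 a + y2 a).
by rewrite -big_split; apply: eq_bigr => a _; rewrite mulrDl.
Qed.

Lemma inJN z : inJ z -> inJ (- z).
Proof.
move=> [y ->]; exists (fun a => - y a).
by rewrite -sumrN; apply: eq_bigr => a _; rewrite mulNr.
Qed.

Lemma inJM c z : inJ z -> inJ (c * z).
Proof.
move=> [y ->]; exists (fun a => c * y a).
by rewrite mulr_sumr; apply: eq_bigr => a _; rewrite mulrA.
Qed.

Lemma inJ_sum (I : finType) (F : I -> A) : (forall i, inJ (F i)) -> inJ (\sum_i F i).
Proof. move=> HF; elim/big_ind: _ => //; [exact: inJ0 | exact: inJD]. Qed.

Lemma inJd a : inJ (d a).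
Proof.
exists (fun b => (a == b)%:R).
rewrite (bigD1 a) //= eqxx mul1r big1 ?addr0 // => b.
by rewrite eq_sym => /negbTE ->; rewrite mul0r.
Qed.

Lemma xH_int c (k : int) : x c * (H + k%:~R)^-1 = (H + (k + 1)%:~R)^-1 * x c.
Proof.
apply: shift_inv => //.
rewrite mulrDr hxH commr_int mulrDl rmorphD /= rmorph1.
rewrite !mulrDl addrA. by rewrite addrAC.
Qed.

Lemma xRmat c b t a a2 K K' : x c * (K + 1)^-1 = (K' + 1)^-1 * x c ->
  x c * Rmat eta_lo eta_up b t a a2 K = Rmat eta_lo eta_up b t a a2 K' * x c.
Proof.
move=> HK; rewrite /Rmat mulrDr mulrDl.
congr (_ + _).
  by rewrite /kdelta -natrM; apply: commr_nat.
rewrite -!mulrA (mulrA (x c)) -(eta_lo_central _ _ (x c)) -mulrA.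
by rewrite (mulrA (x c)) -(eta_up_central _ _ (x c)) -mulrA HK.
Qed.

Lemma deltas_cons (b : 'I_n) bs a as_ : deltas A (b :: bs) (a :: as_) = kdelta A b a * deltas A bs as_.
Proof. by rewrite /deltas /= big_cons. Qed.

Lemma x_deltas c (bs as_ : seq 'I_n) : x c * deltas A bs as_ = deltas A bs as_ * x c.
Proof. by apply: commr_prod => i _; apply: commr_nat. Qed.

Lemma SmatE b1 b2 bt a1 a2 atl K :
  Smat eta_lo eta_up (b1 :: b2 :: bt) (a1 :: a2 :: atl) K =
  deltas A (b1 :: b2 :: bt) (a1 :: a2 :: atl) +
  \sum_(t < n) Rmat eta_lo eta_up b1 t a1 a2 (K - (size bt).+1%:R) *
     Smat eta_lo eta_up (b2 :: bt) (t :: atl) K.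
Proof. by []. Qed.

Lemma xSmat c bs : forall as_ (k : int),
  x c * Smat eta_lo eta_up bs as_ (H + k%:~R) = Smat eta_lo eta_up bs as_ (H + (k + 1)%:~R) * x c.
Proof.
elim: bs => [|b1 [|b2 bt] IH] as_ k.
- by rewrite /= mulr0 mul0r.
- case: as_ => [|a1 [|a2 atl]]; rewrite /= ?mulr0 ?mul0r //.
  exact: commr_nat.
- case: as_ => [|a1 [|a2 atl]]; first by rewrite /= mulr0 mul0r.
    by rewrite /= mulr0 mul0r.
  rewrite !SmatE.
  rewrite mulrDr mulrDl x_deltas; congr (_ + _).
  rewrite mulr_sumr mulr_suml; apply: eq_bigr => t _.
  rewrite mulrA (@xRmat _ _ _ _ _ _ (H + (k + 1)%:~R - (size bt).+1%:R)); last first.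
    set m := (size bt).+1.
    have -> : H + k%:~R - m%:R + 1 = H + (k - m%:Z + 1)%:~R.
      by rewrite !rmorphD rmorphN /= rmorph1 !addrA.
    have -> : H + (k + 1)%:~R - m%:R + 1 = H + (k - m%:Z + 1 + 1)%:~R.
      by rewrite !rmorphD rmorphN /= rmorph1 !addrA (addrAC _ 1).
    exact: xH_int.
  by rewrite -mulrA IH mulrA.
Qed.

Lemma deltas_sum (F : seq 'I_n -> A) bs : forall m, size bs = m ->
  \sum_(cs : m.-tuple 'I_n) deltas A bs cs * F cs = F bs.
Proof.
elim: bs F => [|b bs IH] F [|m] //= Hs.
  by rewrite (sum_tuple0 _ _ (fun s => deltas A [::] s * F s)) /deltas big_nil mul1r.
case: Hs => Hs.
rewrite (sum_tupleS _ _ _ (fun s => deltas A (b :: bs) s * F s)).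
under eq_bigr => c _ do (under eq_bigr => t _ do rewrite deltas_cons -mulrA; rewrite -mulr_sumr (IH (fun s => F (c :: s)) m Hs)).
rewrite (bigD1 b) //= /kdelta eqxx mul1r big1 ?addr0 // => c.
by rewrite eq_sym => /negbTE ->; rewrite mul0r.
Qed.

Lemma main_ind k : forall (bs : seq 'I_n), size bs = k.+1 -> forall a,
  inJ (d a * \prod_(b <- bs) x b
       - \sum_(cs : k.-tuple 'I_n)
           Smat eta_lo eta_up bs (a :: cs) (H + k%:R) * \prod_(c <- cs) x c).
Proof.
elim: k => [|k IH] bs.
  case: bs => [|b1 [|b2 bt]] Hs a; try discriminate.
  rewrite (sum_tuple0 _ _ (fun s => Smat eta_lo eta_up [:: b1] (a :: s) (H + 0%:R)
                                     * \prod_(c <- s) x c)).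
  rewrite !big_cons !big_nil !mulr1 hdx /= /kdelta eq_sym addrAC subrr add0r.
  apply: inJ_sum => c; apply: inJ_sum => e; apply: inJM; exact: inJd.
case: bs => [|b1 [|b2 bt]] Hs a; try discriminate.
have Hbt : size bt = k by case: Hs.
set rest := b2 :: bt.
set Xr := \prod_(b <- rest) x b.
set K1 := H + k.+1%:R.
pose T e := \sum_(cs : k.-tuple 'I_n)
           Smat eta_lo eta_up rest (e :: cs) (H + k%:R) * \prod_(c <- cs) x c.
have E1 : \sum_(cs : k.+1.-tuple 'I_n)
     Smat eta_lo eta_up (b1 :: rest) (a :: cs) K1 * \prod_(c <- cs) x c
   = kdelta A b1 a * Xr + \sum_(c < n) \sum_(cs : k.-tuple 'I_n) \sum_(t < n)
       Rmat eta_lo eta_up b1 t a c H * Smat eta_lo eta_up rest (t :: cs) K1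
         * (x c * \prod_(c0 <- cs) x c0).
  rewrite (sum_tupleS _ _ _ (fun s => Smat eta_lo eta_up (b1 :: rest) (a :: s) K1
                                     * \prod_(c <- s) x c)).
  under eq_bigr => c _ do under eq_bigr => cs _ do rewrite SmatE mulrDl.
  under eq_bigr => c _ do rewrite big_split.
  rewrite big_split /=; congr (_ + _).
    rewrite -(sum_tupleS _ _ _ (fun s => deltas A (b1 :: b2 :: bt) (a :: s)
                                     * \prod_(c <- s) x c)).
    under eq_bigr => cs _ do rewrite deltas_cons -mulrA.
    by rewrite -mulr_sumr (@deltas_sum (fun s => \prod_(c <- s) x c) rest k.+1) // /rest /= Hbt.
  apply: eq_bigr => c _; apply: eq_bigr => cs _.
  rewrite mulr_suml big_cons; apply: eq_bigr => t _.
  by rewrite Hbt /K1 addrK.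
have eK : H + (k%:Z + 1)%:~R = K1 by rewrite rmorphD rmorph1 /= natr1.
have E2 : \sum_(c < n) \sum_(e < n) Rmat eta_lo eta_up b1 e a c H * x c * T e
   = \sum_(c < n) \sum_(cs : k.-tuple 'I_n) \sum_(t < n)
       Rmat eta_lo eta_up b1 t a c H * Smat eta_lo eta_up rest (t :: cs) K1
         * (x c * \prod_(c0 <- cs) x c0).
  apply: eq_bigr => c _.
  under eq_bigr => e _ do rewrite mulr_sumr.
  rewrite exchange_big /=.
  apply: eq_bigr => cs _; apply: eq_bigr => t _.
  rewrite -!mulrA; congr (_ * _); rewrite !mulrA; congr (_ * _).
  by have := xSmat c rest (t :: cs) k; rewrite eK.
have Heq : d a * \prod_(b <- b1 :: rest) x b
   - \sum_(cs : k.+1.-tuple 'I_n)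
       Smat eta_lo eta_up (b1 :: rest) (a :: cs) K1 * \prod_(c <- cs) x c
   = \sum_(c < n) \sum_(e < n) Rmat eta_lo eta_up b1 e a c H * x c * (d e * Xr - T e).
  rewrite big_cons mulrA hdx mulrDl E1.
  rewrite [RHS](_ : _ = (\sum_(c < n) \sum_(e < n) Rmat eta_lo eta_up b1 e a c H * x c * d e) * Xr
      - \sum_(c < n) \sum_(e < n) Rmat eta_lo eta_up b1 e a c H * x c * T e); last first.
    rewrite mulr_suml -sumrB; apply: eq_bigr => c _.
    by rewrite mulr_suml -sumrB; apply: eq_bigr => e _; rewrite mulrBr mulrA.
  by rewrite E2 /kdelta eq_sym opprD addrACA subrr add0r.
rewrite Heq; apply: inJ_sum => c; apply: inJ_sum => e; apply: inJM.
have Hr : size rest = k.+1 by rewrite /rest /= Hbt.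
exact: (IH rest Hr e).
Qed.

End Main.

Theorem mainTheorem11
  (A : unitRingType) (n : nat) (hn : (3 <= n)%N)
  (x d : 'I_n -> A) (H : A) (eta_lo eta_up : 'I_n -> 'I_n -> A)
  (eta_lo_central : forall a b (y : A), eta_lo a b * y = y * eta_lo a b)
  (eta_up_central : forall a b (y : A), eta_up a b * y = y * eta_up a b)
  (eta_lo_sym : forall a b, eta_lo a b = eta_lo b a)
  (eta_inv : forall a c, \sum_(b < n) eta_lo a b * eta_up b c = kdelta A a c)
  (hxx : forall a b, x a * x b = x b * x a)
  (hdd : forall a b, d a * d b = d b * d a)
  (hH_unit : forall k : int, H + k%:~R \is a GRing.unit)
  (hxH : forall a, x a * H = (H + 1) * x a)
  (hdH : forall a, d a * H = (H - 1) * d a)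
  (hdx : forall a b, d a * x b =
     kdelta A a b + \sum_(c < n) \sum_(e < n) Rmat eta_lo eta_up b e a c H * x c * d e) :
  forall (r : nat) (a1 : 'I_n) (bs : r.-tuple 'I_n), (0 < r)%N ->
  exists y : 'I_n -> A,
    d a1 * \prod_(b <- bs) x b
    - \sum_(cs : (r.-1).-tuple 'I_n)
        Smat eta_lo eta_up bs (a1 :: cs) (H + (r.-1)%:R) * \prod_(c <- cs) x c
    = \sum_(a < n) y a * d a.
Proof.
move=> [|k] a1 bs Hr //.
exact: (@main_ind A n x d H eta_lo eta_up eta_lo_central eta_up_central hH_unit hxH hdx k bs (size_tuple bs) a1).
Qed.
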